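(* Let $\mathcal{C}$ be a small category and let $\beta<\gamma$ be cardinals with $\gamma$ regular, such that every hom-set $\mathcal{C}(B,C)$ has cardinality less than $\beta$ and $\mathcal{C}$ has fewer than $\gamma$ objects. Then every $\gamma$-flat functor $M\colon\mathcal{C}^{op}\to\mathbf{Set}$ is Cauchy.
   Context: A functor $M\colon \mathcal{C}^{op}\to\mathbf{Set}$ is $\gamma$-flat if its left Kan extension $\mathrm{Lan}_Y M\colon[\mathcal{C},\mathbf{Set}]\to\mathbf{Set}$ along the Yoneda embedding $Y\colon\mathcal{C}^{op}\to[\mathcal{C},\mathbf{Set}]$ preserves all $\gamma$-small limits (limits of diagrams indexed by categories with fewer than $\gamma$ morphisms); it is Cauchy if $\mathrm{Lan}_Y M$ preserves all small limits. *)

(* Defs.v *)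
From Stdlib Require Import Relations.


Record Cat := {
  Ob : Type;
  Hom : Ob -> Ob -> Type;
  idm : forall a, Hom a a;
  comp : forall a b c, Hom b c -> Hom a b -> Hom a c;
  comp_id_l : forall a b (f : Hom a b), comp a b b (idm b) f = f;
  comp_id_r : forall a b (f : Hom a b), comp a a b f (idm a) = f;
  comp_assoc : forall a b c d (f : Hom a b) (g : Hom b c) (h : Hom c d),
      comp a c d h (comp a b c g f) = comp a b d (comp b c d h g) f
}.
Arguments Hom : clear implicits.
Arguments idm {_} _.
Arguments comp {_} {_ _ _} _ _.

Definition Mor (C : Cat) : Type := {a : Ob C & {b : Ob C & Hom C a b}}.

Record Presheaf (C : Cat) := {
  P0 : Ob C -> Type;
  Pact : forall a b, Hom C a b -> P0 b -> P0 a;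
  Pact_id : forall a (x : P0 a), Pact a a (idm a) x = x;
  Pact_comp : forall a b c (f : Hom C a b) (g : Hom C b c) (x : P0 c),
      Pact a c (comp g f) x = Pact a b f (Pact b c g x)
}.
Arguments P0 {C} M a : rename.
Arguments Pact {C} M {a b} f x : rename.

(** * Diagrams  D : I -> [C, Set]  (functors from a small category I into
    the functor category [C,Set]) *)
Record Diagram (I C : Cat) := {
  D0 : Ob I -> Ob C -> Type;
  Dact : forall i a b, Hom C a b -> D0 i a -> D0 i b;
  Dact_id : forall i a (x : D0 i a), Dact i a a (idm a) x = x;
  Dact_comp : forall i a b c (f : Hom C a b) (g : Hom C b c) (x : D0 i a),
      Dact i a c (comp g f) x = Dact i b c g (Dact i a b f x);
  Dmap : forall i j, Hom I i j -> forall a, D0 i a -> D0 j a;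
  Dmap_nat : forall i j (u : Hom I i j) a b (f : Hom C a b) (x : D0 i a),
      Dmap i j u b (Dact i a b f x) = Dact j a b f (Dmap i j u a x);
  Dmap_id : forall i a (x : D0 i a), Dmap i i (idm i) a x = x;
  Dmap_comp : forall i j k (u : Hom I i j) (v : Hom I j k) a (x : D0 i a),
      Dmap i k (comp v u) a x = Dmap j k v a (Dmap i j u a x)
}.
Arguments D0 {I C} D i a : rename.
Arguments Dact {I C} D i {a b} f x : rename.
Arguments Dmap {I C} D {i j} u a x : rename.

Definition quot (S : Type) (R : S -> S -> Prop) : Type :=
  {P : S -> Prop | exists x, forall y, P y <-> R x y}.
Definition cls (S : Type) (R : S -> S -> Prop) (x : S) : quot S R :=
  exist _ (R x) (ex_intro _ x (fun y => iff_refl (R x y))).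

(** * The tensor product  M (x)_C F = coend^c M(c) x F(c),
    for M : C^op -> Set and a (raw) functor F : C -> Set given by
    F0 and its action Fact.  This is the value Lan_Y M (F) of the left
    Kan extension of M along the Yoneda embedding C^op -> [C,Set]. *)
Section Tensor.
Variables (C : Cat) (M : Presheaf C) (F0 : Ob C -> Type)
          (Fact : forall a b, Hom C a b -> F0 a -> F0 b).

Definition TRep : Type := {c : Ob C & (P0 M c * F0 c)%type}.

Inductive tstep : TRep -> TRep -> Prop :=
  | tstep_intro : forall c d (f : Hom C c d) (m : P0 M d) (x : F0 c),
      tstep (existT _ c (Pact M f m, x)) (existT _ d (m, Fact c d f x)).

Definition teq : TRep -> TRep -> Prop := clos_refl_sym_trans TRep tstep.

Definition Tensor : Type := quot TRep teq.
End Tensor.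
Arguments TRep {C} M F0.
Arguments tstep {C} M {F0} Fact _ _.
Arguments teq {C} M {F0} Fact _ _.
Arguments Tensor {C} M {F0} Fact.
Arguments cls {S} R x.

Definition tmap (C : Cat) (M : Presheaf C) (F0 G0 : Ob C -> Type)
  (eta : forall a, F0 a -> G0 a) (p : TRep M F0) : TRep M G0 :=
  existT _ (projT1 p) (fst (projT2 p), eta (projT1 p) (snd (projT2 p))).
Arguments tmap {C} M {F0 G0} eta p.

Section Limit.
Variables (I C : Cat) (D : Diagram I C).

Definition L0 (a : Ob C) : Type :=
  {x : forall i, D0 D i a | forall i j (u : Hom I i j), Dmap D u a (x i) = x j}.

Lemma Lact_ok a b (f : Hom C a b) (x : L0 a) :
  forall i j (u : Hom I i j),
    Dmap D u b (Dact D i f (proj1_sig x i)) = Dact D j f (proj1_sig x j).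
Proof.
  intros i j u. rewrite Dmap_nat. destruct x as [x hx]. simpl. now rewrite hx.
Qed.

Definition Lact a b (f : Hom C a b) (x : L0 a) : L0 b :=
  exist _ (fun i => Dact D i f (proj1_sig x i)) (Lact_ok a b f x).
End Limit.
Arguments L0 {I C} D a.
Arguments Lact {I C} D {a b} f x.

Definition DF (I C : Cat) (D : Diagram I C) (i : Ob I) :
  forall a b, Hom C a b -> D0 D i a -> D0 D i b :=
  fun a b f x => Dact D i f x.
Arguments DF {I C} D i _ _ _ _.
Definition LF (I C : Cat) (D : Diagram I C) :
  forall a b, Hom C a b -> L0 D a -> L0 D b :=
  fun a b f x => Lact D f x.
Arguments LF {I C} D _ _ _ _.

(** * Lan_Y M preserves the limit of D: the canonical comparison map
      M (x) (lim D)  -->  lim_i ( M (x) D i )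
    is a bijection.  The target is the limit in Set of the diagram
    i |-> M (x) D i, i.e. compatible families of classes. *)
Section Preserve.
Variables (I C : Cat) (M : Presheaf C) (D : Diagram I C).

Definition LimTensor : Type :=
  {y : forall i, Tensor M (DF D i) |
    forall i j (u : Hom I i j),
      exists r : TRep M (D0 D i),
        cls (teq M (DF D i)) r = y i /\
        cls (teq M (DF D j)) (tmap M (fun a => Dmap D u a) r) = y j}.

Definition compar (p : TRep M (L0 D)) :
  forall i, Tensor M (DF D i) :=
  fun i => cls (teq M (DF D i))
               (existT _ (projT1 p) (fst (projT2 p), proj1_sig (snd (projT2 p)) i)).

Definition LanY_preserves_limit : Prop :=
  (forall y : LimTensor, exists p, forall i, compar p i = proj1_sig y i) /\
  (forall p q, (forall i, compar p i = compar q i) ->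
               teq M (LF D) p q).
End Preserve.
Arguments LimTensor {I C} M D.
Arguments compar {I C} M D p i.
Arguments LanY_preserves_limit {I C} M D.

Definition card_le (X Y : Type) : Prop := exists f : X -> Y, forall x y, f x = f y -> x = y.
Definition card_lt (X Y : Type) : Prop := card_le X Y /\ ~ card_le Y X.

Definition regular_card (K : Type) : Prop :=
  card_le nat K /\
  forall (J : Type) (A : J -> Type),
    card_lt J K -> (forall j, card_lt (A j) K) -> card_lt {j : J & A j} K.

Definition gamma_flat (K : Type) (C : Cat) (M : Presheaf C) : Prop :=
  forall (I : Cat), card_lt (Mor I) K ->
    forall D : Diagram I C, LanY_preserves_limit M D.

Definition cauchy (C : Cat) (M : Presheaf C) : Prop :=
  forall (I : Cat) (D : Diagram I C), LanY_preserves_limit M D.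
Arguments gamma_flat K {C} M.
Arguments cauchy {C} M.

(* Main.v *)
Require Import Defs.
From Stdlib Require Import Relations Classical ClassicalEpsilon FunctionalExtensionality PropExtensionality ProofIrrelevance Eqdep.
From mathcomp Require ssreflect ssrbool boolp classical_sets.
Module Comp.
Import ssreflect ssrbool boolp classical_sets.

Lemma card_comp (A B : Type) : card_le A B \/ card_le B A.
Proof.
pose T := {g : A -> B -> Prop | (forall a b b', g a b -> g a b' -> b = b') /\
    (forall a a' b, g a b -> g a' b -> a = a')}.
have t0 : T.
  by exists (fun _ _ => False); split => ? ? ? [].
pose R := fun s t : T => `[< forall a b, proj1_sig s a b -> proj1_sig t a b >].
have [t tmax] : exists t, premaximal R t.
  apply: (@ZL_preorder T t0 R).
- by move=> s; apply/asboolP.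
- by move=> r s u /asboolP H1 /asboolP H2; apply/asboolP => a b /H1 /H2.
- move=> A0 tot.
  have fn : forall a b b', (exists t, A0 t /\ proj1_sig t a b) ->
      (exists t, A0 t /\ proj1_sig t a b') -> b = b'.
    move=> a b b' [t1 [A1 h1]] [t2 [A2 h2]].
    case: (tot _ _ A1 A2) => /asboolP H.
    + by move: (H _ _ h1) => h1'; case: t2 {A2 H} h2 h1' => g [fg _] /= h2 h1'; apply: fg h1' h2.
    + by move: (H _ _ h2) => h2'; case: t1 {A1 H} h1 h2' => g [fg _] /= h1 h2'; apply: fg h1 h2'.
  have ij : forall a a' b, (exists t, A0 t /\ proj1_sig t a b) ->
      (exists t, A0 t /\ proj1_sig t a' b) -> a = a'.
    move=> a a' b [t1 [A1 h1]] [t2 [A2 h2]].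
    case: (tot _ _ A1 A2) => /asboolP H.
    + by move: (H _ _ h1) => h1'; case: t2 {A2 H} h2 h1' => g [_ ig] /= h2 h1'; apply: ig h1' h2.
    + by move: (H _ _ h2) => h2'; case: t1 {A1 H} h1 h2' => g [_ ig] /= h1 h2'; apply: ig h1 h2'.
  exists (exist _ (fun a b => exists t, A0 t /\ proj1_sig t a b) (conj fn ij)).
  by move=> s As; apply/asboolP => a b h; exists s.
case: t tmax => g [fg ig] tmax.
  case: (Classical_Prop.classic (forall a, exists b, g a b)) => [tot|ntot].
    left.
    exists (fun a => proj1_sig (cid (tot a))).
    move=> x y.
    case: (cid (tot x)) => bx hx.
    case: (cid (tot y)) => [by' hy] /= E.
    by subst; apply: ig hx hy.
  case: (Classical_Prop.classic (forall b, exists a, g a b)) => [tot|ntot2].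
    right.
    exists (fun b => proj1_sig (cid (tot b))).
    move=> x y.
    case: (cid (tot x)) => ax hx.
    case: (cid (tot y)) => [ay hy] /= E.
    by subst; apply: fg hx hy.
  exfalso.
  case: (not_all_ex_not _ _ ntot) => a0 Ha0.
  case: (not_all_ex_not _ _ ntot2) => b0 Hb0.
  pose g' := fun a b => g a b \/ (a = a0 /\ b = b0).
  have fg' : forall a b b', g' a b -> g' a b' -> b = b'.
    move=> a b b' [h|[-> ->]] [h'|[E ->]].
    + exact: fg h h'.
    + by subst; case: Ha0; exists b.
    + by case: Ha0; exists b'.
    + by [].
  have ig' : forall a a' b, g' a b -> g' a' b -> a = a'.
    move=> a a' b [h|[-> ->]] [h'|[-> E]].
    + exact: ig h h'.
    + by subst; case: Hb0; exists a.
    + by case: Hb0; exists a'.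
    + by [].
  have := tmax (exist _ g' (conj fg' ig')).
  have H1 : R (exist _ g (conj fg ig)) (exist _ g' (conj fg' ig')).
    by apply/asboolP => a b h; left.
  move=> /(_ H1) /asboolP /= H2.
  case: Ha0; exists b0; apply: H2; by right.
Qed.
End Comp.

Lemma sig_eq_pi (A : Type) (P : A -> Prop) (u v : sig P) :
  proj1_sig u = proj1_sig v -> u = v.
Proof. destruct u as [x hx], v as [y hy]; simpl; intros E; subst; f_equal; apply proof_irrelevance. Qed.

Lemma cls_inv {S} (R : S -> S -> Prop) x y :
  (forall z, R z z) -> cls R x = cls R y -> R x y.
Proof.
  intros refl H. assert (E : proj1_sig (cls R x) = proj1_sig (cls R y)) by (rewrite H; reflexivity).
  simpl in E. rewrite E. apply refl.
Qed.

Lemma cls_eq {S} (R : S -> S -> Prop) x y :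
  equivalence S R -> R x y -> cls R x = cls R y.
Proof.
  intros [Hr Ht Hs] H. apply sig_eq_pi. simpl.
  apply functional_extensionality; intro z; apply propositional_extensionality; split; intro K.
  - apply (Ht _ x); auto.
  - apply (Ht _ y); auto.
Qed.

Lemma quot_rep {S} (R : S -> S -> Prop) (q : quot S R) : exists x, cls R x = q.
Proof.
  destruct q as [P [x Hx]]. exists x. apply sig_eq_pi. simpl.
  apply functional_extensionality; intro y; apply propositional_extensionality; split; apply Hx.
Qed.

Lemma teq_equiv C M F0 Fact : equivalence _ (@teq C M F0 Fact).
Proof. apply clos_rst_is_equiv. Qed.

Lemma teq_refl C M F0 Fact p : @teq C M F0 Fact p p.
Proof. apply rst_refl. Qed.

Lemma cls_teq C M F0 Fact p q : @teq C M F0 Fact p q -> cls (teq M Fact) p = cls (teq M Fact) q.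
Proof. apply cls_eq, teq_equiv. Qed.

Lemma teq_cls C M F0 Fact p q : cls (teq M Fact) p = cls (teq M Fact) q -> @teq C M F0 Fact p q.
Proof. apply cls_inv, teq_refl. Qed.

Lemma card_le_trans X Y Z : card_le X Y -> card_le Y Z -> card_le X Z.
Proof. intros [f hf] [g hg]. exists (fun x => g (f x)). auto. Qed.

Lemma card_lt_le X Y K : card_le X Y -> card_lt Y K -> card_lt X K.
Proof.
  intros h [h1 h2]. split. eapply card_le_trans; eauto.
  intros h3. apply h2. eapply card_le_trans; eauto.
Qed.

Lemma card_lt_trans X Y K : card_lt X Y -> card_lt Y K -> card_lt X K.
Proof. intros [h _]. apply card_lt_le; auto. Qed.

Definition enc (o : option bool) : nat :=
  match o with None => 0 | Some false => 1 | Some true => 2 end.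

Lemma card_lt_ob K : regular_card K -> card_lt (option bool) K.
Proof.
  intros [[e he] _]. split.
  - exists (fun o => e (enc o)). intros x y H. apply he in H.
    destruct x as [[]|], y as [[]|]; simpl in H; congruence.
  - intros [f hf].
    assert (Hi : forall i j, f (e i) = f (e j) -> i = j) by (intros i j H; apply he, hf, H).
    destruct (f (e 0)) as [[]|] eqn:E0; destruct (f (e 1)) as [[]|] eqn:E1;
    destruct (f (e 2)) as [[]|] eqn:E2; destruct (f (e 3)) as [[]|] eqn:E3;
    first [ assert (0 = 1) by (apply Hi; congruence); discriminate
          | assert (0 = 2) by (apply Hi; congruence); discriminate
          | assert (0 = 3) by (apply Hi; congruence); discriminate
          | assert (1 = 2) by (apply Hi; congruence); discriminate
          | assert (1 = 3) by (apply Hi; congruence); discriminate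
          | assert (2 = 3) by (apply Hi; congruence); discriminate ].
Qed.

Lemma card_lt_bool K : regular_card K -> card_lt bool K.
Proof. intro r. apply (card_lt_le _ (option bool)); [|apply card_lt_ob; auto].
  exists Some. congruence. Qed.
Lemma card_lt_unit K : regular_card K -> card_lt unit K.
Proof. intro r. apply (card_lt_le _ (option bool)); [|apply card_lt_ob; auto].
  exists (fun _ => None). intros [] []; auto. Qed.

Definition EmptyCat : Cat.
refine {| Ob := False; Hom := fun _ _ => False; idm := fun a => match a with end;
          comp := fun a b c g f => match a with end |}; intros [].
Defined.

Definition EmptyDiag (C : Cat) : Diagram EmptyCat C.
refine {| D0 := fun (i : Ob EmptyCat) _ => match i with end;
          Dact := fun (i : Ob EmptyCat) _ _ _ _ => match i with end;
          Dmap := fun (i j : Ob EmptyCat) _ _ _ => match i with end |}; intros [].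
Defined.

Lemma M_nonempty (C : Cat) (K : Type) (M : Presheaf C) :
  regular_card K -> gamma_flat K M -> exists d (n : P0 M d), True.
Proof.
  intros reg flat.
  assert (Hc : card_lt (Mor EmptyCat) K).
  { split.
    - exists (fun m : Mor EmptyCat => match projT1 m with end). intros [[]].
    - intros [f _]. destruct reg as [[e _] _]. destruct (f (e 0)) as [[]]. }
  destruct (flat EmptyCat Hc (EmptyDiag C)) as [surj _].
  assert (y : LimTensor M (EmptyDiag C)).
  { exists (fun i : Ob EmptyCat => match i with end). intros []. }
  destruct (surj y) as [[d [n _]] _]. exists d, n; exact I.
Qed.

Section Shape.
Variables (P : Type) (Ar : P -> Type).

Definition SH (a b : option P) : Type :=
  match a, b with
  | None, None => unit
  | None, Some p => Ar p
  | Some _, None => False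
  | Some p, Some q => p = q
  end.

Definition Sid (a : option P) : SH a a :=
  match a with None => tt | Some p => eq_refl end.

Definition Scomp (a b c : option P) : SH b c -> SH a b -> SH a c.
  destruct a as [p|], b as [q|], c as [r|]; simpl; intros g f;
  first [ exact (eq_trans f g) | exact (eq_rect _ Ar f _ g) | exact g | exact tt
        | exact (False_rect _ g) | exact (False_rect _ f) ].
Defined.

Ltac cleanup := repeat match goal with
  | H : _ = _ |- _ => destruct H
  | H : unit |- _ => destruct H
  | H : False |- _ => destruct H end.

Definition ShapeCat : Cat.
refine {| Ob := option P; Hom := SH; idm := Sid; comp := Scomp |}.
- intros [p|] [q|] f; simpl in *; cleanup; reflexivity.
- intros [p|] [q|] f; simpl in *; cleanup; reflexivity.
- intros [p|] [q|] [r|] [s|] f g h; simpl in *; cleanup; reflexivity.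
Defined.

Definition code (m : Mor ShapeCat) (iota : forall p, Ar p -> bool) :
  {b : bool & if b then {p : P & option bool} else unit}.
  destruct m as [[p|] [[q|] f]]; simpl in f.
  - exact (existT _ true (existT _ p None)).
  - destruct f.
  - exact (existT _ true (existT _ q (Some (iota q f)))).
  - exact (existT _ false tt).
Defined.

Lemma code_inj iota (hi : forall p a a', iota p a = iota p a' -> a = a') m m' :
  code m iota = code m' iota -> m = m'.
Proof.
  destruct m as [[p|] [[q|] f]], m' as [[p'|] [[q'|] f']]; simpl in *; cleanup;
  intros E; try discriminate;
  apply inj_pair2 in E; try discriminate; try (injection E; discriminate).
  - pose proof (f_equal (@projT1 _ _) E) as E'; simpl in E'. subst. reflexivity.
  - pose proof (f_equal (@projT1 _ _) E) as E'; simpl in E'. subst.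
    apply inj_pair2 in E. injection E; intro E3. apply hi in E3. subst. reflexivity.
  - reflexivity.
Qed.

Lemma shape_card K (reg : regular_card K) (hP : card_lt P K)
  (iota : forall p, Ar p -> bool) (hi : forall p a a', iota p a = iota p a' -> a = a') :
  card_lt (Mor ShapeCat) K.
Proof.
  apply (card_lt_le _ {b : bool & if b then {p : P & option bool} else unit}).
  - exists (fun m => code m iota). apply code_inj; auto.
  - destruct reg as [hn hreg]. apply hreg.
    + apply card_lt_bool; split; auto.
    + intros [|].
      * apply hreg; auto. intros; apply card_lt_ob; split; auto.
      * apply card_lt_unit; split; auto.
Qed.
End Shape.

Ltac cleanup := repeat match goal with
  | H : _ = _ |- _ => destruct H
  | H : unit |- _ => destruct H
  | H : False |- _ => destruct H end.

Section Cone.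
Variables (C : Cat) (M : Presheaf C) (P : Type) (Ar : P -> Type).
Variables (F0 : Ob C -> Type) (Fact : forall a b, Hom C a b -> F0 a -> F0 b)
  (Fid : forall a x, Fact a a (idm a) x = x)
  (Fcomp : forall a b c (f : Hom C a b) (g : Hom C b c) x, Fact a c (comp g f) x = Fact b c g (Fact a b f x)).
Variables (cp : P -> Ob C) (phi : forall p, Ar p -> forall e, F0 e -> Hom C (cp p) e)
  (phinat : forall p u a b (f : Hom C a b) x, phi p u b (Fact a b f x) = comp f (phi p u a x)).

Definition CD0 (i : option P) (e : Ob C) : Type :=
  match i with None => F0 e | Some p => Hom C (cp p) e end.

Definition CDact (i : option P) a b (f : Hom C a b) : CD0 i a -> CD0 i b :=
  match i with None => Fact a b f | Some p => fun x => comp f x end.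

Definition CDmap (i j : option P) (u : SH P Ar i j) e : CD0 i e -> CD0 j e.
  destruct i as [p|], j as [q|]; simpl in *.
  - exact (fun x => eq_rect p (fun r => Hom C (cp r) e) x q u).
  - destruct u.
  - exact (phi q u e).
  - exact (fun x => x).
Defined.

Definition ConeDiag : Diagram (ShapeCat P Ar) C.
refine (@Build_Diagram (ShapeCat P Ar) C CD0 CDact _ _ CDmap _ _ _).
- intros [p|] a x; simpl. apply comp_id_l. apply Fid.
- intros [p|] a b c f g x; simpl. symmetry; apply comp_assoc. apply Fcomp.
- intros [p|] [q|] u a b f x; simpl in *; cleanup; simpl; try reflexivity. apply phinat.
- intros [p|] a x; reflexivity.
- intros [p|] [q|] [r|] u v a x; simpl in *; cleanup; reflexivity.
Defined.

Lemma cone_lemma (K : Type) (reg : regular_card K) (flat : gamma_flat K M)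
  (hP : card_lt P K)
  (iota : forall p, Ar p -> bool) (hi : forall p a a', iota p a = iota p a' -> a = a')
  (rs : TRep M F0) (rp : forall p, TRep M (fun e => Hom C (cp p) e))
  (compat : forall p u, teq M (fun a b (f : Hom C a b) (g : Hom C (cp p) a) => comp f g)
                         (tmap M (phi p u) rs) (rp p)) :
  exists d (n : P0 M d) (x : F0 d) (t : forall p, Hom C (cp p) d),
    teq M Fact (existT _ d (n, x)) rs /\
    (forall p, teq M (fun a b (f : Hom C a b) (g : Hom C (cp p) a) => comp f g)
                 (existT _ d (n, t p)) (rp p)) /\
    (forall p u, phi p u d x = t p).
Proof.
  pose (yf := fun i : Ob (ShapeCat P Ar) =>
          match i return Tensor M (DF ConeDiag i) with
          | None => cls (teq M (DF ConeDiag None)) rs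
          | Some p => cls (teq M (DF ConeDiag (Some p))) (rp p) end).
  assert (Hy : forall i j (u : Hom (ShapeCat P Ar) i j),
      exists r : TRep M (D0 ConeDiag i),
        cls (teq M (DF ConeDiag i)) r = yf i /\
        cls (teq M (DF ConeDiag j)) (tmap M (fun a => Dmap ConeDiag u a) r) = yf j).
  { intros [p|] [q|] u; simpl in u.
    - destruct u. exists (rp p). split; [reflexivity|].
      unfold yf; simpl. destruct (rp p) as [c [m z]]. reflexivity.
    - destruct u.
    - exists rs. split; [reflexivity|]. simpl. apply cls_teq. apply compat.
    - exists rs. split; [reflexivity|]. unfold yf; simpl. destruct rs as [c [m z]]. reflexivity. }
  destruct (flat _ (shape_card P Ar K reg hP iota hi) ConeDiag) as [surj _].
  destruct (surj (exist _ yf Hy)) as [[d [n [xs hxs]]] Hp].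
  exists d, n, (xs None), (fun p => xs (Some p)).
  split; [|split].
  - specialize (Hp None). apply teq_cls in Hp. exact Hp.
  - intros p. specialize (Hp (Some p)). apply teq_cls in Hp. exact Hp.
  - intros p u. exact (hxs None (Some p) u).
Qed.
End Cone.

Definition compF (C : Cat) (c : Ob C) := fun a b (f : Hom C a b) (g : Hom C c a) => comp f g.

Lemma psi_teq (C : Cat) (M : Presheaf C) (c : Ob C) p q :
  teq M (compF C c) p q ->
  Pact M (snd (projT2 p)) (fst (projT2 p)) = Pact M (snd (projT2 q)) (fst (projT2 q)).
Proof.
  induction 1 as [p q H| | |]; try congruence.
  destruct H. simpl. unfold compF. rewrite Pact_comp. reflexivity.
Qed.

Lemma step_lemma (C : Cat) (M : Presheaf C) c e (g : Hom C c e) (n : P0 M e) :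
  teq M (compF C c) (existT _ e (n, g)) (existT _ c (Pact M g n, idm c)).
Proof.
  assert (E : existT (fun a => (P0 M a * Hom C c a)%type) e (n, g) =
              existT (fun a => (P0 M a * Hom C c a)%type) e (n, compF C c c e g (idm c)))
    by (unfold compF; rewrite comp_id_r; reflexivity).
  rewrite E. apply rst_sym, rst_step. constructor.
Qed.

Lemma cover (C : Cat) (M : Presheaf C) K (reg : regular_card K) (flat : gamma_flat K M)
  (J : Type) (hJ : card_lt J K) (c : J -> Ob C) (m : forall j, P0 M (c j)) :
  exists d (n : P0 M d) (g : forall j, Hom C (c j) d), forall j, Pact M (g j) n = m j.
Proof.
  destruct (M_nonempty C K M reg flat) as [d0 [n0 _]].
  destruct (cone_lemma C M J (fun _ => False) (fun _ => unit) (fun _ _ _ _ => tt)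
     (fun a x => match x with tt => eq_refl end) (fun _ _ _ _ _ _ => eq_refl)
     c (fun p u => False_rect _ u) (fun p u => False_rect _ u) K reg flat hJ
     (fun p u => False_rect _ u) (fun p u => False_rect _ u)
     (existT _ d0 (n0, tt)) (fun j => existT _ (c j) (m j, idm (c j)))
     (fun p u => False_rect _ u)) as [d [n [x [t [_ [H _]]]]]].
  exists d, n, t. intros j. specialize (H j). apply (psi_teq C M (c j)) in H.
  simpl in H. rewrite H. apply Pact_id.
Qed.

Lemma coeq (C : Cat) (M : Presheaf C) K (reg : regular_card K) (flat : gamma_flat K M)
  d (n : P0 M d) (P : Type) (hP : card_lt P K) (cp : P -> Ob C)
  (g1 g2 : forall p, Hom C (cp p) d) (hg : forall p, Pact M (g1 p) n = Pact M (g2 p) n) :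
  exists d' (n' : P0 M d') (x : Hom C d d'),
    Pact M x n' = n /\ forall p, comp x (g1 p) = comp x (g2 p).
Proof.
  assert (Fcomp : forall a b c (f : Hom C a b) (g : Hom C b c) (x : Hom C d a),
     comp (comp g f) x = comp g (comp f x)) by (intros; symmetry; apply comp_assoc).
  assert (phinat : forall p (u : bool) a b (f : Hom C a b) (x : Hom C d a),
     comp (comp f x) (if u then g1 p else g2 p) = comp f (comp x (if u then g1 p else g2 p)))
    by (intros; symmetry; apply comp_assoc).
  destruct (cone_lemma C M P (fun _ => bool) (fun e => Hom C d e) (fun a b f x => comp f x)
     (fun a x => comp_id_l C d a x) Fcomp cp
     (fun p u e x => comp x (if u then g1 p else g2 p)) phinat K reg flat hP
     (fun _ b => b) (fun _ a a' E => E)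
     (existT _ d (n, idm d)) (fun p => existT _ (cp p) (Pact M (g1 p) n, idm (cp p))))
    as [d' [n' [x [t [H1 [_ H3]]]]]].
  - intros p u. unfold tmap; simpl. rewrite comp_id_l.
    destruct u.
    + apply (step_lemma C M (cp p) d (g1 p) n).
    + rewrite hg. apply (step_lemma C M (cp p) d (g2 p) n).
  - exists d', n', x. split.
    + apply (psi_teq C M d) in H1. simpl in H1. rewrite H1. apply Pact_id.
    + intros p. rewrite (H3 p true), (H3 p false). reflexivity.
Qed.

Section Phi.
Variables (C : Cat) (M : Presheaf C) (d : Ob C) (n : P0 M d)
  (s : forall c, P0 M c -> Hom C c d)
  (sec : forall c m, Pact M (s c m) n = m)
  (snat : forall a b (f : Hom C a b) (m : P0 M b), s a (Pact M f m) = comp (s b m) f).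
Variables (F0 : Ob C -> Type) (Fact : forall a b, Hom C a b -> F0 a -> F0 b).

Definition Phi (p : TRep M F0) : F0 d :=
  Fact (projT1 p) d (s _ (fst (projT2 p))) (snd (projT2 p)).

Lemma Phi_teq (Fcomp : forall a b c (f : Hom C a b) (g : Hom C b c) x,
                  Fact a c (comp g f) x = Fact b c g (Fact a b f x)) p q :
  teq M Fact p q -> Phi p = Phi q.
Proof.
  induction 1 as [p q H| | |]; try congruence.
  destruct H. unfold Phi; simpl. rewrite snat. apply Fcomp.
Qed.

Lemma Phi_rep p : teq M Fact p (existT _ d (n, Phi p)).
Proof.
  destruct p as [c [m z]]. unfold Phi; simpl.
  generalize (sec c m). generalize (s c m). intros g Hg. subst m.
  apply rst_step. constructor.
Qed.
End Phi.

Theorem corollary2p8 (C : Cat) (Kbeta Kgamma : Type) :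
  card_lt Kbeta Kgamma ->
  regular_card Kgamma ->
  (forall B C' : Ob C, card_lt (Hom C B C') Kbeta) ->
  card_lt (Ob C) Kgamma ->
  forall M : Presheaf C, gamma_flat Kgamma M -> cauchy M.
Proof.
  intros hbg reg hHom hOb M flat.
  assert (hM : forall c, card_lt (P0 M c) Kgamma).
  { intros c. destruct (Comp.card_comp (P0 M c) Kbeta) as [h|h].
    - apply (card_lt_le _ Kbeta); auto.
    - exfalso. destruct h as [f hf].
      destruct (cover C M Kgamma reg flat Kbeta hbg (fun _ => c) f) as [d [n [g hg]]].
      destruct (hHom c d) as [_ hn]. apply hn. exists g.
      intros x y E. apply hf. rewrite <- (hg x), <- (hg y), E. reflexivity. }
  destruct (cover C M Kgamma reg flat {c : Ob C & P0 M c}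
     (proj2 reg _ _ hOb hM) (@projT1 _ _) (@projT2 _ _)) as [d [n [g0 hg0]]].
  pose (s0 := fun c (m : P0 M c) => g0 (existT _ c m)).
  assert (hs0 : forall c m, Pact M (s0 c m) n = m) by (intros; apply (hg0 (existT _ c m))).
  pose (PP := {c' : Ob C & {gg : (Hom C c' d * Hom C c' d)%type |
                  Pact M (fst gg) n = Pact M (snd gg) n}}).
  assert (hPP : card_lt PP Kgamma).
  { apply (proj2 reg (Ob C) (fun c' => {gg : (Hom C c' d * Hom C c' d)%type |
                  Pact M (fst gg) n = Pact M (snd gg) n})); [exact hOb|]. intros c'.
    apply (card_lt_le _ {_ : Hom C c' d & Hom C c' d}).
    - exists (fun x => existT (fun _ => Hom C c' d) (fst (proj1_sig x)) (snd (proj1_sig x))).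
      intros x y E. apply sig_eq_pi.
      pose proof (f_equal (@projT1 _ _) E) as E1.
      pose proof (f_equal (@projT2 _ (fun _ => Hom C c' d)) E) as E2.
      simpl in E1, E2. destruct (proj1_sig x), (proj1_sig y). simpl in *. congruence.
    - apply (proj2 reg (Hom C c' d) (fun _ => Hom C c' d)); [|intros _];
        apply (card_lt_trans _ Kbeta); auto. }
  destruct (coeq C M Kgamma reg flat d n PP hPP (@projT1 _ _)
      (fun p => fst (proj1_sig (projT2 p))) (fun p => snd (proj1_sig (projT2 p)))
      (fun p => proj2_sig (projT2 p))) as [d' [n' [x [hx hcx]]]].
  pose (h := comp (s0 d' n') x).
  pose (s := fun c (m : P0 M c) => comp h (s0 c m)).
  assert (hn : Pact M h n = n).
  { unfold h. rewrite Pact_comp, hs0. exact hx. }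
  assert (sec : forall c m, Pact M (s c m) n = m).
  { intros c m. unfold s. rewrite Pact_comp, hn. apply hs0. }
  assert (snat : forall a b (f : Hom C a b) (m : P0 M b), s a (Pact M f m) = comp (s b m) f).
  { intros a b f m. unfold s. rewrite <- comp_assoc. unfold h.
    rewrite <- !comp_assoc. f_equal.
    assert (Hp : Pact M (s0 a (Pact M f m)) n = Pact M (comp (s0 b m) f) n)
      by (rewrite Pact_comp, !hs0; reflexivity).
    exact (hcx (existT _ a (exist _ (s0 a (Pact M f m), comp (s0 b m) f) Hp))). }
  intros I D. split.
  - intros [y hy].
    assert (hr : forall i, exists r, cls (teq M (DF D i)) r = y i) by (intros; apply quot_rep).
    pose (r := fun i => proj1_sig (constructive_indefinite_description _ (hr i))).
    assert (hr' : forall i, cls (teq M (DF D i)) (r i) = y i)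
      by (intros i; exact (proj2_sig (constructive_indefinite_description _ (hr i)))).
    clearbody r.
    pose (v := fun i => Phi C M d s (D0 D i) (DF D i) (r i)).
    assert (hv : forall i j (u : Hom I i j), Dmap D u d (v i) = v j).
    { intros i j u. destruct (hy i j u) as [r0 [E1 E2]].
      rewrite <- hr' in E1, E2. apply teq_cls in E1. apply teq_cls in E2.
      unfold v.
      rewrite <- (Phi_teq C M d s snat (D0 D i) (DF D i) (fun a b c f g x => @Dact_comp _ _ D i a b c f g x) _ _ E1).
      rewrite <- (Phi_teq C M d s snat (D0 D j) (DF D j) (fun a b c f g x => @Dact_comp _ _ D j a b c f g x) _ _ E2).
      destruct r0 as [c [m z]]. unfold Phi, tmap, DF; simpl.
      rewrite Dmap_nat. reflexivity. }
    exists (existT _ d (n, exist _ v hv)). intros i. simpl.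
    rewrite <- hr'. unfold compar; simpl. apply cls_teq. apply rst_sym.
    apply (Phi_rep C M d n s sec).
  - intros [c [m xx]] [c' [m' xx']] H.
    assert (E : Lact D (s c m) xx = Lact D (s c' m') xx').
    { apply sig_eq_pi. simpl. apply functional_extensionality_dep. intros i.
      specialize (H i). unfold compar in H; simpl in H. apply teq_cls in H.
      apply (Phi_teq C M d s snat (D0 D i) (DF D i) (fun a b c f g x => @Dact_comp _ _ D i a b c f g x)) in H.
      exact H. }
    eapply rst_trans. apply (Phi_rep C M d n s sec).
    eapply rst_trans; [|apply rst_sym; apply (Phi_rep C M d n s sec)].
    assert (E' : Phi C M d s (L0 D) (LF D) (existT _ c (m, xx)) =
                 Phi C M d s (L0 D) (LF D) (existT _ c' (m', xx'))) by exact E.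
    rewrite E'. apply rst_refl.
Qed.
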